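(* Consider iterative self-improvement with binary reward $s(q,a)\in\{0,1\}$, where at each iteration $t$ one samples $n$ questions $q\sim p_0$, generates one answer $a\sim \pi_{\hat\theta_t}(\cdot\mid q)$ per question, keeps the $n_t\le n$ pairs with $s(q,a)=1$, and sets $\hat\theta_{t+1}$ to the maximum-likelihood estimate over a finite model class $\Pi$ on these accepted pairs; $V_{p_0}(\theta):=\mathbb{E}_{q\sim p_0,\,a\sim\pi_\theta(\cdot\mid q)}[s(q,a)]$ denotes the expected reward. Assume there exist $c\in(0,1)$ and $\gamma\ge 0$ such that for any question distribution $p$ and any model $\theta$ in a small neighborhood $\Theta$ of the pretrained initialization, $\Pr_{q\sim p}[\alpha(\theta,q)<c\,V_p(\theta)]\le\gamma$, where $\alpha(\theta,q):=\Pr_{a\sim\pi_\theta(\cdot\mid q)}[s(q,a)=1]$. Define \[ F(x):=1-\gamma-\frac{c_\delta \nu}{c\sqrt{x-c_{\delta'}\nu}}\quad\text{on } x>c_{\delta'}\nu, \] with $\nu:=\sqrt{1/n}$, $c_\delta:=\sqrt{2\log(|\Pi|\,\delta^{-1})}$, $c_{\delta'}:=\sqrt{\log(\delta'^{-1})/2}$ (so that, with probability at least $1-t(\delta+\delta')$, $V_{p_0}(\hat\theta_t)\ge F^{\circ t}(V_{p_0}(\hat\theta_0))$, where $F^{\circ t}$ is the $t$-fold composition of $F$). Let $\nu$ be sufficiently small such that \[ 0<\frac{c_\delta \nu}{c\,(1-\gamma-c_{\delta'}\nu)^{3/2}}<\frac{2}{3\sqrt{3}}. \] Let $\mathcal I(1,\nu)=(x_-(1,\nu),x_+(1,\nu))\subset(c_{\delta'}\nu,\,1-\gamma)$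 be the open interval whose endpoints $x_-(1,\nu)<x_+(1,\nu)$ are the two solutions of the fixed-point equation $F(x)=x$. Then, for any non-negative integer $t$, $F^{\circ(t+1)}(V_{p_0}(\hat\theta_0))>F^{\circ t}(V_{p_0}(\hat\theta_0))$ and $F^{\circ t}(V_{p_0}(\hat\theta_0))\in\mathcal I(1,\nu)$ hold if and only if $V_{p_0}(\hat\theta_0)\in\mathcal I(1,\nu)$. Moreover, $x_-(1,\nu)$ is increasing in $\nu$, $x_+(1,\nu)$ is decreasing in $\nu$, and the interval length $|\mathcal I(1,\nu)|=x_+(1,\nu)-x_-(1,\nu)$ is decreasing in $\nu$ and satisfies \[ |\mathcal I(1,\nu)|\;\ge\;(1-\gamma-c_{\delta'}\nu)-\frac{3\sqrt3}{2}\cdot\frac{c_\delta \nu}{c\sqrt{\,1-\gamma-c_{\delta'}\nu\,}}. \]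
   Context: Setting of iterative self-improvement for mathematical reasoning with binary verifiable reward; the previous result (Corollary 4.4) gives the high-probability lower bound $V_{p_0}(\hat\theta_{t+1})\ge F(V_{p_0}(\hat\theta_t))$ and its iterated version. *)

(* Defs.v *)
From Stdlib Require Import Reals.
Open Scope R_scope.

Definition c_delta (Pi_card : nat) (delta : R) : R :=
  sqrt (2 * ln (INR Pi_card / delta)).

Definition c_delta' (delta' : R) : R := sqrt (ln (/ delta') / 2).

(* F(x) := 1 - gamma - cd * nu / (c * sqrt(x - cd' * nu)), meaningful on x > cd' * nu
   (outside that domain the value is the Stdlib junk value). *)
Definition F (gamma c cd cd' nu x : R) : R :=
  1 - gamma - cd * nu / (c * sqrt (x - cd' * nu)).

Definition Fiter (gamma c cd cd' nu : R) (t : nat) (x : R) : R :=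
  Nat.iter t (F gamma c cd cd' nu) x.

Definition nu_small (gamma c cd cd' nu : R) : Prop :=
  0 < nu /\
  let A := 1 - gamma - cd' * nu in
  0 < cd * nu / (c * (A * sqrt A)) < 2 / (3 * sqrt 3).

(* Main.v *)
From Stdlib Require Import Reals Lra Psatz Classical ClassicalEpsilon.
Open Scope R_scope.

Require Import Defs.
Definition gpoly (A s : R) := A*s - s*s*s.

Lemma gpoly_cont A K : continuity (fun s => A*s - s*s*s - K).
Proof. reg. Qed.
Lemma gpoly_cont2 A K : continuity (fun s => K - (A*s - s*s*s)).
Proof. reg. Qed.

Lemma roots_exist A K : 0 < A -> 0 < K -> K * (3 * sqrt 3) < 2 * A * sqrt A ->
  (exists s, 0 < s /\ 3*(s*s) < A /\ gpoly A s = K) /\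
  (exists s, 0 < s /\ A < 3*(s*s) /\ gpoly A s = K).
Proof.
  intros HA HK Hc. unfold gpoly.
  set (a := sqrt A). set (r := sqrt 3).
  assert (Ha : 0 < a) by (apply sqrt_lt_R0; lra).
  assert (Hr : 0 < r) by (apply sqrt_lt_R0; lra).
  assert (Ha2 : a * a = A) by (apply sqrt_sqrt; lra).
  assert (Hr2 : r * r = 3) by (apply sqrt_sqrt; lra).
  set (st := a / r).
  assert (Hst : 0 < st) by (unfold st; apply Rdiv_lt_0_compat; lra).
  assert (Hst2 : 3 * (st * st) = A).
  { unfold st. replace (a/r*(a/r)) with ((a*a)/(r*r)) by (field; lra).
    rewrite Ha2, Hr2. field. }
  assert (Hgst : A * st - st*st*st - K > 0).
  { assert (E: A * st - st*st*st = 2 * A * a / (3 * r)).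
    { replace (A*st - st*st*st) with (st * (A - st*st)) by ring.
      replace (st*st) with (A/3) by lra. unfold st. rewrite <- Ha2. field. lra. }
    rewrite E. apply Rlt_gt. apply Rlt_0_minus.
    apply Rmult_lt_reg_r with (3*r). lra.
    replace (2*A*a/(3*r)*(3*r)) with (2*A*a) by (field; lra). unfold a, r. lra. }
  split.
  - destruct (IVT (fun s => A*s - s*s*s - K) 0 st (gpoly_cont A K)) as [z [Hz Hfz]];
      [lra | simpl; lra | simpl; lra |].
    exists z. simpl in Hfz.
    assert (z <> 0) by (intro Hz0; rewrite Hz0 in Hfz; lra).
    assert (z <> st) by (intro Hz0; rewrite Hz0 in Hfz; lra).
    repeat split; try lra. nra.
  - destruct (IVT (fun s => K - (A*s - s*s*s)) st a (gpoly_cont2 A K)) as [z [Hz Hfz]].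
    + assert (st < a). { unfold st. apply Rmult_lt_reg_r with r; [lra|].
        unfold Rdiv. rewrite Rmult_assoc, Rinv_l; [|lra]. nra. }
      lra.
    + simpl; lra.
    + simpl. rewrite <- Ha2. nra.
    + simpl in Hfz. exists z.
      assert (z <> st) by (intro Hz0; rewrite Hz0 in Hfz; lra).
      repeat split; try lra. nra.
Qed.

Lemma gmono_inc A s t : 0 < s -> s < t -> 3*(t*t) <= A -> gpoly A s < gpoly A t.
Proof. intros. unfold gpoly.
  assert (s*s + s*t + t*t < A) by nra.
  replace (A*t - t*t*t - (A*s - s*s*s)) with ((t-s)*(A - (s*s+s*t+t*t))) by ring.
  assert (0 < (t-s)*(A - (s*s+s*t+t*t))) by (apply Rmult_lt_0_compat; lra).
  enough (A * t - t * t * t - (A * s - s * s * s) > 0) by lra.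
  replace (A*t - t*t*t - (A*s - s*s*s)) with ((t-s)*(A - (s*s+s*t+t*t))) by ring. lra.
Qed.

Lemma gmono_dec A s t : 0 < s -> s < t -> A <= 3*(s*s) -> gpoly A t < gpoly A s.
Proof. intros. unfold gpoly.
  assert (A < s*s + s*t + t*t) by nra.
  assert (0 < (t-s)*((s*s+s*t+t*t) - A)) by (apply Rmult_lt_0_compat; lra).
  enough (A * s - s * s * s - (A * t - t * t * t) > 0) by lra.
  replace (A*s - s*s*s - (A*t - t*t*t)) with ((t-s)*((s*s+s*t+t*t) - A)) by ring. lra.
Qed.

Lemma sign_lemma A K s1 s2 s :
  0 < s1 -> 3*(s1*s1) < A -> gpoly A s1 = K ->
  0 < s2 -> A < 3*(s2*s2) -> gpoly A s2 = K -> 0 < s ->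
  s1 < s2 /\
  (K < gpoly A s <-> s1 < s < s2) /\ (gpoly A s = K <-> s = s1 \/ s = s2).
Proof.
  intros H1 H1b H1c H2 H2b H2c Hs.
  assert (H12 : s1 < s2) by nra.
  split; [exact H12|].
  destruct (total_order_T s s1) as [[Hlt|Heq]|Hgt].
  - assert (gpoly A s < K) by (rewrite <- H1c; apply gmono_inc; nra). 
    split; split; intros; try lra; destruct H0; lra.
  - subst s. split; split; intros; lra.
  - destruct (total_order_T s s2) as [[Hlt2|Heq2]|Hgt2].
    + assert (K < gpoly A s).
      { destruct (Rle_lt_dec (3*(s*s)) A).
        - rewrite <- H1c. apply gmono_inc; lra.
        - rewrite <- H2c. apply gmono_dec; lra. }
      split; split; intros; try lra.
    + subst s. split; split; intros; lra.
    + assert (gpoly A s < K) by (rewrite <- H2c; apply gmono_dec; lra).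
      split; split; intros; try lra; destruct H0; lra.
Qed.

Definition Aof gamma cd' nu := 1 - gamma - cd'*nu.
Definition Kof c cd nu := cd*nu/c.
Definition s1f A K := epsilon (inhabits 0) (fun s => 0 < s /\ 3*(s*s) < A /\ gpoly A s = K).
Definition s2f A K := epsilon (inhabits 0) (fun s => 0 < s /\ A < 3*(s*s) /\ gpoly A s = K).

Lemma small_facts gamma c cd cd' nu : 0 < c -> nu_small gamma c cd cd' nu ->
  0 < nu /\ 0 < Aof gamma cd' nu /\ 0 < Kof c cd nu /\
  Kof c cd nu * (3 * sqrt 3) < 2 * Aof gamma cd' nu * sqrt (Aof gamma cd' nu).
Proof.
  intros Hc [Hnu [H1 H2]]. unfold Aof, Kof.
  set (A := 1 - gamma - cd'*nu) in *.
  assert (HA : 0 < A).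
  { destruct (Rle_lt_dec A 0) as [h|h]; [|exact h].
    rewrite (sqrt_neg_0 A h), Rmult_0_r, Rmult_0_r, Rdiv_0_r in H1. lra. }
  assert (Ha : 0 < sqrt A) by (apply sqrt_lt_R0; lra).
  assert (Hr : 0 < sqrt 3) by (apply sqrt_lt_R0; lra).
  assert (E : cd*nu/(c*(A*sqrt A)) = (cd*nu/c) / (A * sqrt A)) by (field; lra).
  rewrite E in H1, H2.
  assert (HAa : 0 < A * sqrt A) by nra.
  repeat split; try lra.
  - replace (cd*nu/c) with ((cd*nu/c)/(A*sqrt A) * (A*sqrt A)) by (field; lra). nra.
  - set (K := cd*nu/c) in *.
    apply Rmult_lt_compat_r with (r := A * sqrt A * (3*sqrt 3)) in H2; [|nra].
    replace (K / (A*sqrt A) * (A*sqrt A*(3*sqrt 3))) with (K*(3*sqrt 3)) in H2 by (field; lra).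
    replace (2 / (3*sqrt 3) * (A*sqrt A*(3*sqrt 3))) with (2*A*sqrt A) in H2 by (field; lra).
    lra.
Qed.

Lemma roots_spec gamma c cd cd' nu : 0 < c -> nu_small gamma c cd cd' nu ->
  let A := Aof gamma cd' nu in let K := Kof c cd nu in
  (0 < s1f A K /\ 3*(s1f A K * s1f A K) < A /\ gpoly A (s1f A K) = K) /\
  (0 < s2f A K /\ A < 3*(s2f A K * s2f A K) /\ gpoly A (s2f A K) = K).
Proof.
  intros Hc Hs A K. destruct (small_facts _ _ _ _ _ Hc Hs) as [_ [HA [HK HK2]]].
  destruct (roots_exist A K HA HK HK2) as [E1 E2].
  split; [apply (epsilon_spec (inhabits 0) _ E1) | apply (epsilon_spec (inhabits 0) _ E2)].
Qed.

Lemma F_at gamma c cd cd' nu s : 0 < c -> 0 < s ->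
  F gamma c cd cd' nu (cd'*nu + s*s) = 1 - gamma - Kof c cd nu / s.
Proof.
  intros Hc Hs. unfold F, Kof.
  replace (cd'*nu + s*s - cd'*nu) with (s*s) by ring.
  rewrite sqrt_square by lra. field. lra.
Qed.

Lemma F_low gamma c cd cd' nu x : x <= cd'*nu -> F gamma c cd cd' nu x = 1 - gamma.
Proof.
  intros h. unfold F. rewrite (sqrt_neg_0 (x - cd'*nu)) by lra.
  rewrite Rmult_0_r, Rdiv_0_r. ring.
Qed.

Lemma dyn (Fn : R -> R) b xm xp top : b < xm -> xm < xp -> xp < top ->
  (forall x, x <= b -> Fn x = top) -> (forall x y, b < x -> x < y -> Fn x < Fn y) ->
  Fn xm = xm -> Fn xp = xp -> (forall x, b < x -> (x < Fn x <-> xm < x < xp)) ->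
  forall V0 t, (Nat.iter (S t) Fn V0 > Nat.iter t Fn V0 /\ xm < Nat.iter t Fn V0 < xp)
     <-> xm < V0 < xp.
Proof.
  intros H1 H2 H3 Hlow Hmon Hfm Hfp Hsg.
  assert (step_in : forall x, xm < x < xp -> x < Fn x /\ xm < Fn x < xp).
  { intros x hx. assert (x < Fn x) by (apply Hsg; lra).
    assert (Fn x < Fn xp) by (apply Hmon; lra). lra. }
  assert (step_out : forall x, ~(xm < x < xp) -> ~(xm < Fn x < xp)).
  { intros x hx. destruct (Rle_lt_dec x b) as [h|h].
    - rewrite (Hlow x h). lra.
    - destruct (Rle_lt_dec x xm) as [h2|h2].
      + destruct (Req_dec x xm) as [e|e].
        * subst x. lra.
        * assert (Fn x < Fn xm) by (apply Hmon; lra). lra.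
      + assert (xp <= x) by lra.
        destruct (Req_dec x xp) as [e|e].
        * subst x. lra.
        * assert (Fn xp < Fn x) by (apply Hmon; lra). lra. }
  intros V0 t.
  assert (iter_in : forall t, xm < V0 < xp -> xm < Nat.iter t Fn V0 < xp).
  { induction t0; intros hv; simpl; [exact hv|]. apply step_in. auto. }
  assert (iter_out : forall t, ~(xm < V0 < xp) -> ~(xm < Nat.iter t Fn V0 < xp)).
  { induction t0; intros hv; simpl; [exact hv|]. apply step_out. auto. }
  split.
  - intros [_ h]. destruct (classic (xm < V0 < xp)) as [k|k]; [exact k|].
    exfalso. exact (iter_out t k h).
  - intros hv. pose proof (iter_in t hv) as h. simpl.
    destruct (step_in _ h). split; lra.
Qed.

Lemma decomp b x : b < x -> exists s, 0 < s /\ x = b + s*s.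
Proof. intros h. exists (sqrt (x - b)). split.
  - apply sqrt_lt_R0; lra.
  - rewrite sqrt_sqrt; lra.
Qed.

Lemma sq_inj s t : 0 < s -> 0 < t -> (s*s < t*t <-> s < t).
Proof. intros; split; intros; nra. Qed.

Lemma fix_props gamma c cd cd' nu : 0 < c -> nu_small gamma c cd cd' nu ->
  let b := cd'*nu in let A := Aof gamma cd' nu in let K := Kof c cd nu in
  let xm := b + s1f A K * s1f A K in let xp := b + s2f A K * s2f A K in
  let Fn := F gamma c cd cd' nu in
  (b < xm /\ xm < xp /\ xp < 1 - gamma) /\
  (forall x, b < x -> (Fn x = x <-> x = xm \/ x = xp)) /\
  (forall x, b < x -> (x < Fn x <-> xm < x < xp)) /\
  (forall x y, b < x -> x < y -> Fn x < Fn y) /\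
  Fn xm = xm /\ Fn xp = xp.
Proof.
  intros Hc Hs b A K xm xp Fn.
  destruct (small_facts _ _ _ _ _ Hc Hs) as [Hnu [HA [HK HK2]]].
  fold A K in HA, HK, HK2.
  destruct (roots_spec _ _ _ _ _ Hc Hs) as [[P1 [P1b P1c]] [P2 [P2b P2c]]].
  fold A K in P1, P1b, P1c, P2, P2b, P2c.
  set (s1 := s1f A K) in *. set (s2 := s2f A K) in *.
  assert (HA' : A = 1 - gamma - b) by reflexivity.
  assert (Hs12 : s1 < s2) by nra.
  assert (Hs2A : s2 * s2 < A).
  { unfold gpoly in P2c. nra. }
  assert (FE : forall s, 0 < s -> Fn (b + s*s) - (b + s*s) = (gpoly A s - K)/s).
  { intros s hs. unfold Fn, b. rewrite F_at by lra. fold K. unfold gpoly. rewrite HA'.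
    unfold b. field. lra. }
  assert (Hfix : forall x, b < x -> (Fn x = x <-> x = xm \/ x = xp)).
  { intros x hx. destruct (decomp b x hx) as [s [hs ->]].
    destruct (sign_lemma A K s1 s2 s P1 P1b P1c P2 P2b P2c hs) as [_ [_ [S1 S2]]].
    pose proof (FE s hs) as E.
    split.
    - intro h. assert (gpoly A s = K).
      { assert ((gpoly A s - K)/s = 0) by lra.
        apply Rmult_eq_compat_r with (r := s) in H. unfold Rdiv in H.
        rewrite Rmult_assoc, Rinv_l, Rmult_1_r, Rmult_0_l in H by lra. lra. }
      destruct (S1 H) as [e|e]; [left|right]; unfold xm, xp; rewrite e; ring.
    - intro h. assert (gpoly A s = K).
      { apply S2. destruct h as [h|h]; [left|right]; unfold xm, xp in h; nra. }
      rewrite H, Rminus_diag, Rdiv_0_l in E. lra. }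
  assert (Hsg : forall x, b < x -> (x < Fn x <-> xm < x < xp)).
  { intros x hx. destruct (decomp b x hx) as [s [hs ->]].
    destruct (sign_lemma A K s1 s2 s P1 P1b P1c P2 P2b P2c hs) as [_ [S1 _]].
    pose proof (FE s hs) as E. unfold xm, xp.
    split.
    - intro h. assert (0 < (gpoly A s - K)/s) by lra.
      assert (K < gpoly A s).
      { apply Rmult_lt_compat_r with (r := s) in H; [|lra]. unfold Rdiv in H.
        rewrite Rmult_assoc, Rinv_l, Rmult_1_r, Rmult_0_l in H by lra. lra. }
      apply S1 in H0. nra.
    - intro h. assert (K < gpoly A s) by (apply S1; nra).
      assert (0 < (gpoly A s - K)/s) by (apply Rdiv_lt_0_compat; lra). lra. }
  assert (Hmon : forall x y, b < x -> x < y -> Fn x < Fn y).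
  { intros x y hx hxy. destruct (decomp b x hx) as [s [hs ->]].
    destruct (decomp b y ltac:(lra)) as [t [ht ->]].
    assert (s < t) by nra.
    unfold Fn, b. rewrite !F_at by lra. fold K.
    assert (K / t < K / s).
    { unfold Rdiv. apply Rmult_lt_compat_l; [lra|]. apply Rinv_lt_contravar; nra. }
    lra. }
  assert (Hxm : Fn xm = xm).
  { apply Hfix; [unfold xm; nra|]. left; reflexivity. }
  assert (Hxp : Fn xp = xp).
  { apply Hfix; [unfold xp; nra|]. right; reflexivity. }
  refine (conj (conj _ (conj _ _)) (conj Hfix (conj Hsg (conj Hmon (conj Hxm Hxp))))); unfold xm, xp; try nra.
Qed.

Lemma mono_core A1 K1 A2 K2 u1 u2 v1 v2 :
  0 < u1 -> 3*(u1*u1) < A1 -> gpoly A1 u1 = K1 ->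
  0 < u2 -> A1 < 3*(u2*u2) -> gpoly A1 u2 = K1 ->
  0 < v1 -> 3*(v1*v1) < A2 -> gpoly A2 v1 = K2 ->
  0 < v2 -> A2 < 3*(v2*v2) -> gpoly A2 v2 = K2 ->
  A2 <= A1 -> K1 < K2 -> 0 < K1 ->
  u1 < v1 /\ v2 < u2 /\ A1 - u2*u2 < A2 - v2*v2.
Proof.
  intros. 
  assert (G1 : K1 < gpoly A1 v1) by (unfold gpoly in *; nra).
  assert (G2 : K1 < gpoly A1 v2) by (unfold gpoly in *; nra).
  destruct (sign_lemma A1 K1 u1 u2 v1 H H0 H1 H2 H3 H4 H5) as [_ [[S1 _] _]].
  destruct (sign_lemma A1 K1 u1 u2 v2 H H0 H1 H2 H3 H4 H8) as [_ [[S2 _] _]].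
  specialize (S1 G1). specialize (S2 G2).
  split; [lra|]. split; [lra|].
  unfold gpoly in *.
  assert (E1 : (A1 - u2*u2) * u2 = K1) by lra.
  assert (E2 : (A2 - v2*v2) * v2 = K2) by lra.
  assert (K1 * v2 < K2 * u2) by nra.
  assert (0 < v2 * u2) by nra.
  assert ((A1 - u2*u2) * (v2*u2) < (A2 - v2*v2) * (v2*u2)) by nra.
  nra.
Qed.

Lemma lb_core A K s1 s2 : 0 < A ->
  0 < s1 -> 3*(s1*s1) < A -> gpoly A s1 = K ->
  0 < s2 -> A < 3*(s2*s2) -> gpoly A s2 = K -> 0 < K ->
  s2*s2 - s1*s1 >= A - (3 * sqrt 3 / 2) * (K / sqrt A).
Proof.
  intros HA H1 H1b H1c H2 H2b H2c HK.
  set (a := sqrt A). set (r := sqrt 3).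
  assert (Ha : 0 < a) by (apply sqrt_lt_R0; lra).
  assert (Hr : 0 < r) by (apply sqrt_lt_R0; lra).
  assert (Ha2 : a * a = A) by (apply sqrt_sqrt; lra).
  assert (Hr2 : r * r = 3) by (apply sqrt_sqrt; lra).
  unfold gpoly in *.
  assert (Hs2A : s2*s2 < A).
  { assert (0 < s2 * (A - s2*s2)) by lra.
    destruct (Rlt_le_dec (s2*s2) A); [assumption|].
    assert (s2 * (A - s2*s2) <= 0) by nra. lra. }
  assert (Hs2a : s2 < a).
  { destruct (Rlt_le_dec s2 a); [assumption|]. nra. }
  assert (Hr1 : r * s1 < a).
  { destruct (Rlt_le_dec (r*s1) a); [assumption|].
    assert (a*a <= (r*s1)*(r*s1)) by nra. nra. }
  assert (Hr2' : a < r * s2).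
  { destruct (Rlt_le_dec a (r*s2)); [assumption|].
    assert ((r*s2)*(r*s2) <= a*a) by (apply Rmult_le_compat; nra). nra. }
  assert (B1 : s1*s1*a <= r/2 * K).
  { rewrite <- H1c. rewrite <- Ha2.
    assert (0 <= s1 * (a - r*s1) * (s1 + r*a)) by (apply Rmult_le_pos; [apply Rmult_le_pos|]; nra).
    assert (E: s1*(a - r*s1)*(s1 + r*a) = r*s1*a*a - r*s1*s1*s1 + a*s1*s1 - (r*r)*a*s1*s1) by ring.
    rewrite Hr2 in E. lra. }
  assert (B2 : (A - s2*s2)*a <= r * K).
  { rewrite <- H2c. rewrite <- Ha2.
    assert (0 <= (a*a - s2*s2) * (r*s2 - a)) by (apply Rmult_le_pos; nra).
    lra. }
  assert (E : 3 * r / 2 * (K / a) = (r/2*K + r*K) / a) by (field; lra).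
  rewrite E.
  assert (s1*s1 <= r/2*K/a) by (apply Rmult_le_reg_r with a; [lra|]; replace (r/2*K/a*a) with (r/2*K) by (field; lra); lra).
  assert (A - s2*s2 <= r*K/a) by (apply Rmult_le_reg_r with a; [lra|]; replace (r*K/a*a) with (r*K) by (field; lra); lra).
  assert ((r/2*K + r*K)/a = r/2*K/a + r*K/a) by (field; lra).
  lra.
Qed.
Theorem proposition4p5 (Pi_card : nat) (delta delta' gamma c : R)
  (hPi : (1 <= Pi_card)%nat)
  (hdelta : 0 < delta < 1) (hdelta' : 0 < delta' < 1)
  (hgamma : 0 <= gamma) (hc : 0 < c < 1) :
  let cd := c_delta Pi_card delta in
  let cd' := c_delta' delta' in
  exists xm xp : R -> R,
    (* for every admissible nu: the fixed-point equation F(x) = x on the domain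
       x > cd' nu has exactly the two solutions xm nu < xp nu, and
       I(1,nu) = (xm nu, xp nu) lies in (cd' nu, 1 - gamma) *)
    (forall nu, nu_small gamma c cd cd' nu ->
       cd' * nu < xm nu /\ xm nu < xp nu /\ xp nu < 1 - gamma /\
       (forall x, cd' * nu < x ->
          (F gamma c cd cd' nu x = x <-> (x = xm nu \/ x = xp nu)))) /\
    (* dynamics: for every initial value V0 and every t,
       F^{t+1}(V0) > F^t(V0) /\ F^t(V0) in I(1,nu)  <->  V0 in I(1,nu) *)
    (forall nu, nu_small gamma c cd cd' nu ->
       forall (V0 : R) (t : nat),
         (Fiter gamma c cd cd' nu (S t) V0 > Fiter gamma c cd cd' nu t V0 /\
          xm nu < Fiter gamma c cd cd' nu t V0 < xp nu)
         <-> xm nu < V0 < xp nu) /\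
    (* monotonicity in nu *)
    (forall nu1 nu2, nu_small gamma c cd cd' nu1 -> nu_small gamma c cd cd' nu2 ->
       nu1 < nu2 ->
       xm nu1 < xm nu2 /\ xp nu2 < xp nu1 /\
       xp nu2 - xm nu2 < xp nu1 - xm nu1) /\
    (* lower bound on the interval length *)
    (forall nu, nu_small gamma c cd cd' nu ->
       xp nu - xm nu >=
       (1 - gamma - cd' * nu)
       - (3 * sqrt 3 / 2) * (cd * nu / (c * sqrt (1 - gamma - cd' * nu)))).
Proof.
  intros cd cd'.
  assert (Hcd' : 0 <= cd') by (unfold cd', c_delta'; apply sqrt_pos).
  assert (Hc0 : 0 < c) by lra.
  exists (fun nu => cd'*nu + s1f (Aof gamma cd' nu) (Kof c cd nu) * s1f (Aof gamma cd' nu) (Kof c cd nu)).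
  exists (fun nu => cd'*nu + s2f (Aof gamma cd' nu) (Kof c cd nu) * s2f (Aof gamma cd' nu) (Kof c cd nu)).
  split; [|split; [|split]].
  - intros nu Hs. pose proof (fix_props gamma c cd cd' nu Hc0 Hs) as P. cbv zeta in P.
    destruct P as [[a1 [a2 a3]] [Hfix _]].
    split; [exact a1|]. split; [exact a2|]. split; [exact a3|]. exact Hfix.
  - intros nu Hs V0 t. pose proof (fix_props gamma c cd cd' nu Hc0 Hs) as P. cbv zeta in P.
    destruct P as [[a1 [a2 a3]] [Hfix [Hsg [Hmon [Hxm Hxp]]]]].
    unfold Fiter.
    apply (dyn (F gamma c cd cd' nu) (cd'*nu) _ _ (1 - gamma)); auto.
    intros x hx. apply F_low. exact hx.
  - intros nu1 nu2 Hs1 Hs2 Hlt.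
    destruct (small_facts _ _ _ _ _ Hc0 Hs1) as [Hn1 [HA1 [HK1 _]]].
    destruct (small_facts _ _ _ _ _ Hc0 Hs2) as [Hn2 [HA2 [HK2 _]]].
    pose proof (roots_spec _ _ _ _ _ Hc0 Hs1) as R1. cbv zeta in R1.
    pose proof (roots_spec _ _ _ _ _ Hc0 Hs2) as R2. cbv zeta in R2.
    destruct R1 as [[p1 [p2 p3]] [q1 [q2 q3]]].
    destruct R2 as [[p1' [p2' p3']] [q1' [q2' q3']]].
    assert (HAle : Aof gamma cd' nu2 <= Aof gamma cd' nu1) by (unfold Aof; nra).
    assert (Hcd : 0 < cd).
    { unfold Kof in HK1. assert (0 < cd*nu1/c*c) by nra.
      replace (cd*nu1/c*c) with (cd*nu1) in H by (field; lra). nra. }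
    assert (HKlt : Kof c cd nu1 < Kof c cd nu2).
    { unfold Kof. unfold Rdiv. apply Rmult_lt_compat_r.
      - apply Rinv_0_lt_compat; lra.
      - nra. }
    destruct (mono_core _ _ _ _ _ _ _ _ p1 p2 p3 q1 q2 q3 p1' p2' p3' q1' q2' q3' HAle HKlt HK1)
      as [m1 [m2 m3]].
    assert (EA1 : Aof gamma cd' nu1 = 1 - gamma - cd'*nu1) by reflexivity.
    assert (EA2 : Aof gamma cd' nu2 = 1 - gamma - cd'*nu2) by reflexivity.
    assert (cd'*nu1 <= cd'*nu2) by nra.
    assert (s1f (Aof gamma cd' nu1) (Kof c cd nu1) * s1f (Aof gamma cd' nu1) (Kof c cd nu1)
          < s1f (Aof gamma cd' nu2) (Kof c cd nu2) * s1f (Aof gamma cd' nu2) (Kof c cd nu2)) by nra.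
    cbv beta. split; [lra|]. split; lra.
  - intros nu Hs.
    destruct (small_facts _ _ _ _ _ Hc0 Hs) as [Hn [HA [HK _]]].
    pose proof (roots_spec _ _ _ _ _ Hc0 Hs) as R1. cbv zeta in R1.
    destruct R1 as [[p1 [p2 p3]] [q1 [q2 q3]]].
    pose proof (lb_core _ _ _ _ HA p1 p2 p3 q1 q2 q3 HK) as L.
    assert (Ha : 0 < sqrt (Aof gamma cd' nu)) by (apply sqrt_lt_R0; lra).
    unfold Aof in *.
    replace (cd*nu/(c*sqrt (1 - gamma - cd'*nu))) with (Kof c cd nu / sqrt (1 - gamma - cd'*nu))
      by (unfold Kof; field; lra).
    lra.
Qed.
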